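(* Consider $N$ identical cells. For cell $i\in\{0,\dots,N-1\}$ let $x_i(t)\in\mathbb{R}^n$ be its state, $u_i\in\mathbb{R}$ a constant-in-time input, $y_i(t)\in\mathbb{R}$ its readout, and $w_i(t),v_i(t)\in\mathbb{R}^q$ its coupling output and coupling input, with dynamics $$\dot x_i=f(x_i,v_i,u_i),\qquad w_i=g(x_i),\qquad y_i=h(x_i),\qquad v=(M\otimes I_q)w,$$ where $f,g,h$ are continuously differentiable, $M\in\mathbb{R}^{N\times N}$, $\otimes$ is the Kronecker product, and $x,u,y,w,v$ denote the vertical concatenations over cells (e.g. $w=[w_0^T\cdots w_{N-1}^T]^T$). Assume: (1) $M\mathbf{1}_N=\mu\mathbf{1}_N$ for some $\mu\in\mathbb{R}$ (where $\mathbf{1}_N$ is the all-ones vector), and $M$ is diagonalizable as $M=T\Lambda T^{-1}$ with $\Lambda=\mathrm{diag}(\lambda_0(M),\dots,\lambda_{N-1}(M))$; (2) for a given $\bar u\in\mathbb{R}$ there is $\bar x^*\in\mathbb{R}^n$ with $f(\bar x^*,\mu g(\bar x^* ),\bar u)=0$; set $\underline{x}^*=\mathbf{1}_N\otimes\bar x^*$, $\underline{u}=\bar u\mathbf{1}_N$ and $\bar v^*=\mu g(\bar x^* )$ (so $(\underline{x}^*,\underline{u})$ is a spatially homogeneous steady state); (3) this homogeneous steady state is asymptotically stable, i.e. the matrix $(I_N\otimes A)+(I_N\otimes B_v)(M\otimes I_q)(I_N\otimes G)$ below has all eigenvalues with negative real part. Let $A=\frac{\partial f}{\partial x_i}$,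 $B_v=\frac{\partial f}{\partial v_i}$, $B_u=\frac{\partial f}{\partial u_i}$ evaluated at $(\bar x^*,\bar v^*,\bar u)$, and $C=\frac{dh}{dx_i}(\bar x^* )$, $G=\frac{dg}{dx_i}(\bar x^* )$, and consider the linearized system $$\dot{\tilde x}=\big[(I_N\otimes A)+(I_N\otimes B_v)(M\otimes I_q)(I_N\otimes G)\big]\tilde x+(I_N\otimes B_u)\tilde u,\qquad \tilde y=(I_N\otimes C)\tilde x .$$ For a constant-in-time, spatially varying input $u\in\mathbb{R}^N$, put $\tilde u=u-\underline{u}$ and $\hat u=T^{-1}\tilde u$. Then the steady-state perturbed readout $\tilde y^*$ of the linearized system satisfies $\hat y^*:=T^{-1}\tilde y^*=S\hat u$, where $S$ is the diagonal $N\times N$ matrix with entries $$[S]_{kk}=-C\big(A+\lambda_k(M)B_vG\big)^{-1}B_u,\qquad k=0,\dots,N-1.$$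
   Context: The columns of $T$ are called spatial modes and the numbers $[S]_{kk}$ filter coefficients. $I_m$ denotes the $m\times m$ identity matrix. *)

(* Defs.v *)
From HB Require Import structures.
From mathcomp Require Import all_boot all_order all_algebra.
From mathcomp Require Import all_classical all_reals all_analysis.
From mathcomp Require Import complex mxtens.
Set Implicit Arguments. Unset Strict Implicit. Unset Printing Implicit Defensive.
Import Order.TTheory GRing.Theory Num.Theory.
Import numFieldNormedType.Exports.
Local Open Scope ring_scope.

Definition jacobianC (R : realType) (m n : nat)
  (F : 'cV[R]_m -> 'cV[R]_n) (x : 'cV[R]_m) : 'M[R]_(n, m) :=
  \matrix_(i < n, j < m) ('D_(delta_mx j ord0) F x) i ord0.

Definition gradrow (R : realType) (m : nat)
  (F : 'cV[R]_m -> R) (x : 'cV[R]_m) : 'M[R]_(1, m) :=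
  \row_(j < m) 'D_(delta_mx j ord0) F x.

Definition C1fun (R : realType) (U V : normedModType R) (F : U -> V) : Prop :=
  (forall p, differentiable F p) /\ (forall d : U, continuous (fun p => 'D_d F p)).

Definition cmx (R : realType) (m n : nat) (A : 'M[R]_(m, n)) : 'M[R[i]]_(m, n) :=
  map_mx (real_complex R) A.

Definition hurwitz (R : realType) (n : nat) (J : 'M[R]_n) : Prop :=
  forall l : R[i], eigenvalue (cmx J) l -> complex.Re l < 0.

Definition kronI_col (R : realType) (N n : nat) (B : 'M[R]_(n, 1)) : 'M[R]_(N * n, N) :=
  castmx (erefl (N * n)%N, muln1 N) ((1%:M : 'M[R]_N) *t B).

Definition kronI_row (R : realType) (N n : nat) (C : 'M[R]_(1, n)) : 'M[R]_(N, N * n) :=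
  castmx (muln1 N, erefl (N * n)%N) ((1%:M : 'M[R]_N) *t C).

(* Main.v *)
Require Import Defs.
From HB Require Import structures.
From mathcomp Require Import all_boot all_order all_algebra.
From mathcomp Require Import all_classical all_reals all_analysis.
From mathcomp Require Import complex mxtens.
Import Order.TTheory GRing.Theory Num.Theory.
Import numFieldNormedType.Exports.
Local Open Scope ring_scope.

Section H.
Set Implicit Arguments. Unset Strict Implicit.
Variable K : comNzRingType.

Lemma sum_tens (m n : nat) (F : 'I_(m*n) -> K) :
  \sum_i F i = \sum_(a < m) \sum_(b < n) F (mxtens_index (a, b)).
Proof.
rewrite pair_big /=.
rewrite (reindex (@mxtens_index m n)) /=; last first.
  by exists (@mxtens_unindex m n) => x _; rewrite (mxtens_indexK, mxtens_unindexK).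
by apply: eq_bigr => [[a b]] _.
Qed.

Lemma tensmxDr m n p q (A : 'M[K]_(m,n)) (B C : 'M[K]_(p,q)) :
  A *t (B + C) = A *t B + A *t C.
Proof. by apply/matrixP => i j; rewrite !mxE mulrDr. Qed.

Lemma tensmxZl m n p q c (A : 'M[K]_(m,n)) (B : 'M[K]_(p,q)) :
  (c *: A) *t B = c *: (A *t B).
Proof. by apply/matrixP => i j; rewrite !mxE mulrA. Qed.

Lemma tensmxZr m n p q c (A : 'M[K]_(m,n)) (B : 'M[K]_(p,q)) :
  A *t (c *: B) = c *: (A *t B).
Proof. by apply/matrixP => i j; rewrite !mxE mulrCA. Qed.

Lemma unindex_cast1 (N : nat) (l : 'I_N) :
  mxtens_unindex (cast_ord (esym (muln1 N)) l) = (l, ord0).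
Proof. by congr pair; apply: val_inj => /=; rewrite ?divn1 ?modn1. Qed.

Lemma tensE m n p q (A : 'M[K]_(m,n)) (B : 'M[K]_(p,q)) i j :
  (A *t B) i j = A (mxtens_unindex i).1 (mxtens_unindex j).1
                 * B (mxtens_unindex i).2 (mxtens_unindex j).2.
Proof. by rewrite mxE. Qed.

Definition rtens N n (r : 'rV[K]_N) (w : 'rV[K]_n) : 'rV[K]_(N * n) :=
  \row_j (r 0 (mxtens_unindex j).1 * w 0 (mxtens_unindex j).2).

Lemma rtensE N n (r : 'rV[K]_N) (w : 'rV[K]_n) i a b :
  rtens r w i (mxtens_index (a, b)) = r 0 a * w 0 b.
Proof. by rewrite mxE mxtens_indexK. Qed.

Lemma rtens_mul N N' n n' (r : 'rV[K]_N) (w : 'rV[K]_n) (X : 'M[K]_(N, N')) (Y : 'M[K]_(n, n')) :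
  rtens r w *m (X *t Y) = rtens (r *m X) (w *m Y).
Proof.
apply/matrixP => i j; case: (mxtens_indexP j) => c d.
rewrite mxE sum_tens rtensE !mxE mulr_suml; apply: eq_bigr => a _.
rewrite mulr_sumr; apply: eq_bigr => b _.
by rewrite rtensE tensE !mxtens_indexK /= mulrACA.
Qed.

Lemma rtensDr N n (r : 'rV[K]_N) (w v : 'rV[K]_n) : rtens r (w + v) = rtens r w + rtens r v.
Proof. by apply/matrixP => i j; rewrite !mxE mulrDr. Qed.
Lemma rtensZl N n c (r : 'rV[K]_N) (w : 'rV[K]_n) : rtens (c *: r) w = c *: rtens r w.
Proof. by apply/matrixP => i j; rewrite !mxE mulrA. Qed.
Lemma rtensZr N n c (r : 'rV[K]_N) (w : 'rV[K]_n) : rtens r (c *: w) = c *: rtens r w.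
Proof. by apply/matrixP => i j; rewrite !mxE mulrCA. Qed.
Lemma rtens0 N n (r : 'rV[K]_N) : rtens r (0 : 'rV[K]_n) = 0.
Proof. by apply/matrixP => i j; rewrite !mxE mulr0. Qed.

Lemma krow N n (r : 'rV[K]_N) (C : 'rV[K]_n) :
  r *m castmx (muln1 N, erefl (N * n)%N) ((1%:M : 'M[K]_N) *t C) = rtens r C.
Proof.
apply/matrixP => i j; case: (mxtens_indexP j) => a b.
rewrite rtensE mxE (bigD1 a) //= big1 ?addr0.
  rewrite castmxE tensE cast_ord_id unindex_cast1 mxtens_indexK /= mxE eqxx mulr1n mul1r.
  by rewrite !ord1.
move=> l /negbTE nla; rewrite castmxE tensE cast_ord_id unindex_cast1 mxtens_indexK /= mxE.
by rewrite nla mulr0n mul0r mulr0.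
Qed.

Lemma kcol N n (r : 'rV[K]_N) (w : 'rV[K]_n) (B : 'cV[K]_n) :
  rtens r w *m castmx (erefl (N * n)%N, muln1 N) ((1%:M : 'M[K]_N) *t B)
  = (w *m B) 0 0 *: r.
Proof.
apply/matrixP => i c; rewrite !ord1 !mxE sum_tens.
rewrite (bigD1 c) //= [X in _ + X]big1 ?addr0.
  rewrite mulr_suml; apply: eq_bigr => b _.
  rewrite castmxE rtensE tensE cast_ord_id unindex_cast1 !mxtens_indexK /= mxE eqxx mulr1n mul1r.
  by rewrite [RHS]mulrC mulrA; congr (_ * B _ _); apply: val_inj.
move=> l /negbTE nla; rewrite big1 // => b _.
by rewrite castmxE tensE cast_ord_id unindex_cast1 mxtens_indexK /= [1%:M _ _]mxE nla mulr0n mul0r mulr0.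
Qed.
End H.

Theorem proposition1 (R : realType) (N n q : nat)
  (f : 'cV[R]_n * 'cV[R]_q * R -> 'cV[R]_n)
  (g : 'cV[R]_n -> 'cV[R]_q) (h : 'cV[R]_n -> R)
  (Hf : C1fun f) (Hg : C1fun g) (Hh : C1fun h)
  (M : 'M[R]_N) (mu : R)
  (HM1 : M *m (const_mx 1 : 'cV[R]_N) = mu *: (const_mx 1 : 'cV[R]_N))
  (T : 'M[R[i]]_N) (lam : 'rV[R[i]]_N)
  (HTinv : T \in unitmx)
  (HMdiag : cmx M = T *m diag_mx lam *m invmx T)
  (ubar : R) (xs : 'cV[R]_n)
  (Hss : f (xs, mu *: g xs, ubar) = 0) :
  let vs := mu *: g xs in
  let A := jacobianC (fun x : 'cV[R]_n => f (x, vs, ubar)) xs in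
  let Bv := jacobianC (fun v : 'cV[R]_q => f (xs, v, ubar)) vs in
  let Bu : 'cV[R]_n := 'D_1 (fun u : R => f (xs, vs, u)) ubar in
  let C := gradrow h xs in
  let G := jacobianC g xs in
  let J := (1%:M : 'M[R]_N) *t A
           + ((1%:M : 'M[R]_N) *t Bv) *m (M *t (1%:M : 'M[R]_q))
             *m ((1%:M : 'M[R]_N) *t G) in
  hurwitz J ->
  let S : 'rV[R[i]]_N :=
    \row_(k < N) (- (cmx C *m invmx (cmx A + lam ord0 k *: cmx (Bv *m G))
                        *m cmx Bu) ord0 ord0) in
  forall (u : 'cV[R]_N) (xt : 'cV[R]_(N * n)),
    let ut := u - ubar *: (const_mx 1 : 'cV[R]_N) in
    (* xt is the steady state of the linearized system driven by ut *)
    J *m xt + kronI_col N Bu *m ut = 0 ->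
    let yt := kronI_row N C *m xt in
    invmx T *m cmx yt = diag_mx S *m (invmx T *m cmx ut).
Proof.
move=> vs A Bv Bu C G J Hh' S u xt ut Heq yt.
set Ti := invmx T.
have Hc : cmx J = 1%:M *t cmx A + cmx M *t (cmx Bv *m cmx G).
  by rewrite /J /cmx map_mxD !map_mxM !map_mxT !map_mx1 !tensmx_mul !mul1mx !mulmx1.
have HTM : Ti *m cmx M = diag_mx lam *m Ti by rewrite HMdiag !mulmxA mulVmx // mul1mx.
have Hrow k : row k Ti *m cmx M = lam ord0 k *: row k Ti.
  by rewrite -row_mul HTM mul_diag_mx; apply/rowP => j; rewrite !mxE.
pose Bk k := cmx A + lam ord0 k *: cmx (Bv *m G).
have Hkey k w : rtens (row k Ti) w *m cmx J = rtens (row k Ti) (w *m Bk k).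
  by rewrite Hc mulmxDr !rtens_mul mulmx1 Hrow rtensZl -rtensZr -rtensDr mulmxDr -scalemxAr /Bk /cmx map_mxM.
have nzrow k : row k Ti != 0.
  apply/eqP => H0; have := row_mul k Ti T.
  rewrite mulVmx // H0 mul0mx => /(congr1 (fun X : 'rV[R[i]]_N => X 0 k)); rewrite !mxE eqxx /=.
  by move/eqP; rewrite oner_eq0.
have nz_entry (m p : nat) (X : 'M[R[i]]_(m,p)) : X != 0 -> exists a b, X a b != 0.
  move=> HX; case E: [exists a, exists b, X a b != 0].
    by move/existsP: E => [a /existsP [b Hb]]; exists a, b.
  move: HX; have -> : X = 0; last by rewrite eqxx.
  apply/matrixP => a b; rewrite mxE; apply/eqP.
  by move/negbT/existsPn: E => /(_ a)/existsPn/(_ b); rewrite negbK.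
have Hunit k : Bk k \in unitmx.
  case/boolP: (Bk k \in unitmx) => // Hn.
  have : kermx (Bk k) != 0 by rewrite kermx_eq0 row_free_unit (negbTE Hn).
  move/nz_entry => [i0 [j0 Hij]].
  set w := row i0 (kermx (Bk k)).
  have Hw : w *m Bk k = 0 by rewrite -row_mul mulmx_ker row0.
  have [a [b Hab]] := nz_entry _ _ _ (nzrow k).
  have Hev : eigenvalue (cmx J) 0.
    apply/eigenvalueP; exists (rtens (row k Ti) w).
      by rewrite Hkey Hw rtens0 scale0r.
    apply/eqP => /matrixP /(_ 0 (mxtens_index (b, j0))); rewrite rtensE [X in _ = X]mxE => /eqP.
    rewrite mulf_eq0 => /orP [] /eqP H0.
      by move: Hab; rewrite (ord1 a) H0 eqxx.
    by move: Hij; move: H0; rewrite /w mxE => ->; rewrite eqxx.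
  by have := Hh' 0 Hev; rewrite /= ltxx.
have E : cmx J *m cmx xt + cmx (kronI_col N Bu) *m cmx ut = 0.
  by rewrite -!map_mxM -map_mxD Heq map_mx0.
have HK : cmx (kronI_col N Bu) = castmx (erefl (N*n)%N, muln1 N) (1%:M *t cmx Bu).
  by rewrite /cmx /kronI_col map_castmx map_mxT map_mx1.
have HR : cmx (kronI_row N C) = castmx (muln1 N, erefl (N*n)%N) (1%:M *t cmx C).
  by rewrite /cmx /kronI_row map_castmx map_mxT map_mx1.
have rowE k (X : 'M[R[i]]_(N,1)) : (Ti *m X) k 0 = (row k Ti *m X) 0 0.
  by rewrite -row_mul [RHS]mxE.
apply/matrixP => k j; rewrite (ord1 j) rowE /yt.
have -> : cmx (kronI_row N C *m xt) = cmx (kronI_row N C) *m cmx xt by rewrite /cmx map_mxM.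
rewrite HR mulmxA krow.
set w := cmx C *m invmx (Bk k).
have Hw : w *m Bk k = cmx C by rewrite mulmxKV.
have := congr1 (fun X => rtens (row k Ti) w *m X) E.
rewrite /= mulmx0 mulmxDr !mulmxA Hkey Hw HK kcol => /(congr1 (fun X : 'M[R[i]]_(1,1) => X 0 0)).
move=> H; move: H; rewrite -scalemxAl [X in X = _]mxE [X in _ = X]mxE [X in _ + X]mxE => H.
rewrite -mulmxA mul_diag_mx [RHS]mxE rowE /S [X in X * _]mxE mulNr.
apply/eqP; rewrite -addr_eq0; apply/eqP.
by rewrite -H /w /Bk.
Qed.
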